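(* Let $k$ be a field of characteristic zero, $V$ a $k$-vector space, $V_z=V\otimes_kk((z))$, and $\varphi\in\mathrm{End}_k(V)$ finite potent. Then the series $$\exp_z(\varphi)=1+z\varphi+\frac{z^2\varphi^2}{2}+\frac{z^3\varphi^3}{3!}+\cdots$$ defines a well-defined element of $\mathrm{Aut}_{k((z))}(V_z)$, and the endomorphism $\bar\varphi=\exp_z(\varphi)-1=z\varphi+\frac{z^2\varphi^2}{2}+\cdots$ of $V_z$ is finite potent.
   Context: An endomorphism $\psi$ of a vector space $U$ is finite potent if $\psi^nU$ is finite dimensional for some $n$. *)

(* Defs.v *)
From Stdlib Require Import ClassicalEpsilon.
From HB Require Import structures.
From mathcomp Require Import all_boot all_order all_algebra.
Set Implicit Arguments. Unset Strict Implicit. Unset Printing Implicit Defensive.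
Import Order.TTheory GRing.Theory Num.Theory.
Local Open Scope ring_scope.

(* Formal series sum_j a_j z^j are represented by their coefficient
   functions int -> T. *)

Definition bounded_below (T : zmodType) (a : int -> T) : Prop :=
  exists N : int, forall j : int, j < N -> a j = 0.

(* a chosen lower bound of the support (meaningful when bounded_below a);
   all the sums below do not depend on which valid lower bound is used. *)
Definition lbound (T : zmodType) (a : int -> T) : int :=
  epsilon (inhabits 0%R) (fun N : int => forall j : int, j < N -> a j = 0).

Section Defs.
Variables (k : fieldType) (V : lmodType k).

Definition in_span (s : seq V) (v : V) : Prop :=
  exists c : 'I_(size s) -> k, v = \sum_(i < size s) c i *: s`_i.

(* psi is finite potent: psi^n V is finite dimensional for some n,
   i.e. contained in the span of a finite family *)
Definition finite_potent (psi : {linear V -> V}) : Prop :=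
  exists n : nat, exists s : seq V, forall v : V, in_span s (iter n psi v).

Definition laurent (f : int -> k) : Prop := bounded_below f.

(* V_z = V (x)_k k((z)), realized inside V((z)) as the Laurent series whose
   coefficients all lie in a finite dimensional subspace of V *)
Definition Vz (a : int -> V) : Prop :=
  bounded_below a /\ exists s : seq V, forall m : int, in_span s (a m).

(* k((z))-scalar action on V_z: (f . a)_m = sum_{i+j=m} f_i a_j *)
Definition lscale (f : int -> k) (a : int -> V) : int -> V :=
  fun m => \sum_(i < (absz (m - lbound f - lbound a)%R).+1)
             f (lbound f + i%:Z) *: a (m - lbound f - i%:Z).

(* exp_z(phi) applied to a = sum_j a_j z^j : coefficient of z^m is
   sum_{n >= 0} phi^n (a_{m-n}) / n!  (a finite sum) *)
Definition expz (phi : V -> V) (a : int -> V) : int -> V :=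
  fun m => \sum_(n < (absz (m - lbound a)%R).+1)
             (n`!%:R)^-1 *: iter n phi (a (m - n%:Z)).

Definition phibar (phi : V -> V) (a : int -> V) : int -> V :=
  fun m => expz phi a m - a m.

Definition in_spanz (s : seq (int -> V)) (a : int -> V) : Prop :=
  exists c : 'I_(size s) -> (int -> k),
    (forall i, laurent (c i)) /\
    forall m : int, a m = \sum_(i < size s) lscale (c i) (nth (fun _ => 0) s i) m.

(* an endomorphism psi of V_z is finite potent: psi^n V_z is a finite
   dimensional k((z))-subspace for some n *)
Definition finite_potent_z (psi : (int -> V) -> (int -> V)) : Prop :=
  exists n : nat, exists s : seq (int -> V),
    (forall i : 'I_(size s), Vz (nth (fun _ => 0) s i)) /\
    forall a, Vz a -> in_spanz s (iter n psi a).

End Defs.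

(* Main.v *)
Require Import Defs.
From Stdlib Require Import ClassicalEpsilon FunctionalExtensionality.
From HB Require Import structures.
From mathcomp Require Import all_boot all_order all_algebra zify ring.
Set Implicit Arguments. Unset Strict Implicit. Unset Printing Implicit Defensive.
Import Order.TTheory GRing.Theory Num.Theory.
Local Open Scope ring_scope.

Lemma lbound_spec (T : zmodType) (a : int -> T) :
  bounded_below a -> forall j, j < lbound a -> a j = 0.
Proof.
move=> H; rewrite /lbound; apply: (epsilon_spec (inhabits 0%R) (fun N : int => forall j : int, j < N -> a j = 0)).
exact: H.
Qed.

Section Sums.
Variable (T : nmodType).

Lemma sum_ext_len (F : nat -> T) K K' :
  (forall n, (K <= n)%N -> F n = 0) -> (forall n, (K' <= n)%N -> F n = 0) ->
  \sum_(i < K) F i = \sum_(i < K') F i.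
Proof.
wlog le : K K' / (K <= K')%N.
  move=> W H1 H2; case: (leqP K K') => h; first exact: W.
  by symmetry; apply: W => //; apply: ltnW.
move=> H1 _; rewrite -!(big_mkord xpredT) (@big_cat_nat _ _ _ K 0 K') /=; last by []; last by [].
rewrite [X in _ + X]big1_seq ?addr0 // => i /andP[_]; rewrite mem_index_iota => /andP[h _].
exact: H1.
Qed.

Lemma diag_sum (F : nat -> nat -> T) K :
  (forall n p, (K <= n + p)%N -> F n p = 0) ->
  \sum_(n < K) \sum_(p < K) F n p = \sum_(q < K) \sum_(n < q.+1) F n (q - n)%N.
Proof.
move=> HF.
transitivity (\sum_(q < K) \sum_(n < K) (if (n <= q)%N then F n (q - n)%N else 0)); last first.
  apply: eq_bigr => q _.
  have -> : \sum_(n < q.+1) F n (q - n)%N = \sum_(n < q.+1) (if (n <= q)%N then F n (q - n)%N else 0).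
    by apply: eq_bigr => n _; rewrite -ltnS ltn_ord.
  apply: (@sum_ext_len (fun n => if (n <= q)%N then F n (q - n)%N else 0)).
    by move=> n h; case: ifP => // h'; have := ltn_ord q; lia.
  by move=> n h; rewrite leqNgt h.
rewrite [RHS]exchange_big /=; apply: eq_bigr => n _.
rewrite -(big_mkord xpredT (fun i => if (n <= i)%N then F n (i - n)%N else 0)) -(big_mkord xpredT (fun i => F n i)).
have nK : (n <= K)%N by apply: ltnW.
rewrite [RHS](@big_cat_nat _ _ _ n 0 K) //= [X in _ = X + _]big1_seq ?add0r; last first.
  move=> i /andP[_]; rewrite mem_index_iota => /andP[_ h].
  by rewrite leqNgt h.
rewrite (big_addn 0 K n).
under [X in _ = X]eq_bigr => i _ do rewrite leq_addl addnK.
rewrite !big_mkord; apply: (@sum_ext_len (F n)) => p h.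
  by apply: HF; lia.
by apply: HF; lia.
Qed.

End Sums.

Section Lin.
Variables (k : fieldType) (V : lmodType k).

Definition lin (f : V -> V) :=
  (forall x y, f (x + y) = f x + f y) /\ (forall (c : k) x, f (c *: x) = c *: f x).

Lemma lin_phi (phi : {linear V -> V}) : lin phi.
Proof. split=> [x y|c x]; [exact: raddfD | exact: linearZ]. Qed.

Lemma lin0 f : lin f -> f 0 = 0.
Proof. by case=> _ hZ; have := hZ 0 0; rewrite !scale0r. Qed.

Lemma lin_neg f : lin f -> lin (fun v => - f v).
Proof. by case=> hD hZ; split=> [x y|c x]; rewrite ?hD ?hZ ?opprD ?scalerN. Qed.

Lemma lin_iter f n : lin f -> lin (iter n f).
Proof.
move=> hf; elim: n => [|n [IHD IHZ]]; first by split.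
by case: hf => hD hZ; split=> [x y|c x] /=; rewrite ?IHD ?IHZ ?hD ?hZ.
Qed.

Lemma lin_sum f (I : Type) (r : seq I) (P : pred I) (F : I -> V) : lin f ->
  f (\sum_(i <- r | P i) F i) = \sum_(i <- r | P i) f (F i).
Proof. move=> hf; case: (hf) => hD _; exact: (big_morph f hD (lin0 hf)). Qed.

Lemma iter_neg f n v : lin f ->
  iter n (fun v => - f v) v = (-1) ^+ n *: iter n f v.
Proof.
move=> [hD hZ]; elim: n => [|n IH] /=; first by rewrite expr0 scale1r.
by rewrite IH hZ exprS -scalerA scaleN1r.
Qed.

Lemma in_span0 (s : seq V) : in_span s (0 : V).
Proof. by exists (fun _ => 0); rewrite big1 // => i _; rewrite scale0r. Qed.

Lemma in_spanD (s : seq V) (v w : V) : in_span s v -> in_span s w -> in_span s (v + w).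
Proof.
move=> [c ->] [d ->]; exists (fun i => c i + d i).
by rewrite -big_split /=; apply: eq_bigr => i _; rewrite scalerDl.
Qed.

Lemma in_spanZ (s : seq V) (a : k) (v : V) : in_span s v -> in_span s (a *: v).
Proof.
move=> [c ->]; exists (fun i => a * c i).
by rewrite scaler_sumr; apply: eq_bigr => i _; rewrite scalerA.
Qed.

Lemma in_span_sum (s : seq V) (I : Type) (r : seq I) (P : pred I) (F : I -> V) :
  (forall i, P i -> in_span s (F i)) -> in_span s (\sum_(i <- r | P i) F i).
Proof.
move=> H; apply: (big_ind (in_span s)); [exact: in_span0| exact: in_spanD | exact: H].
Qed.

Lemma in_span_nth (s : seq V) (j : 'I_(size s)) : in_span s s`_j.
Proof.
exists (fun i => (i == j)%:R); rewrite (bigD1 j) //= eqxx scale1r big1 ?addr0 //.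
by move=> i /negPf ->; rewrite scale0r.
Qed.

Lemma in_span_mem (s : seq V) (x : V) : x \in s -> in_span s x.
Proof.
move=> xs; have := in_span_nth (Ordinal (etrans (index_mem x s) xs)).
by rewrite /= nth_index.
Qed.

Lemma in_span_sub (s S : seq V) v :
  (forall x, x \in s -> in_span S x) -> in_span s v -> in_span S v.
Proof.
move=> H [c ->]; apply: in_span_sum => i _; apply: in_spanZ; apply: H.
exact: mem_nth.
Qed.

End Lin.

Definition vb (T : zmodType) (a : int -> T) (N : int) := forall j, j < N -> a j = 0.

Lemma vb_lbound (T : zmodType) (a : int -> T) : bounded_below a -> vb a (lbound a).
Proof. exact: lbound_spec. Qed.

Lemma zsum_eq (T : nmodType) (G : int -> T) (N N' : int) (K K' : nat) :
  (forall j, j < N -> G j = 0) -> (forall j, j < N' -> G j = 0) ->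
  (forall j, N + K%:Z <= j -> G j = 0) -> (forall j, N' + K'%:Z <= j -> G j = 0) ->
  \sum_(i < K) G (N + i%:Z) = \sum_(i < K') G (N' + i%:Z).
Proof.
wlog le : N N' K K' / N' <= N.
  move=> W h1 h2 h3 h4; case: (leP N' N) => h; first exact: W.
  by symmetry; apply: W => //; apply: ltW.
move=> h1 h2 h3 h4; set d := absz (N - N').
rewrite (@sum_ext_len _ (fun i => G (N' + i%:Z)) K' (d + K)); last 2 first.
- by move=> n hn; apply: h4; lia.
- by move=> n hn; apply: h3; lia.
rewrite -(big_mkord xpredT (fun i => G (N' + i%:Z))) (@big_cat_nat _ _ _ d 0 (d + K)) //=; last by apply: leq_addr.
rewrite [X in _ = X + _]big1_seq ?add0r; last first.
  by move=> i /andP[_]; rewrite mem_index_iota => /andP[_ hi]; apply: h1; lia.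
rewrite (big_addn 0 (d + K) d) addKn big_mkord; apply: eq_bigr => i _.
by congr G; lia.
Qed.

Section Big.
Variables (k : fieldType) (V : lmodType k).

Lemma expz_big (phi : V -> V) (a : int -> V) (L : int) (K : nat) (m : int) :
  lin phi -> bounded_below a -> vb a L -> m - L < K%:Z ->
  expz phi a m = \sum_(n < K) (n`!%:R)^-1 *: iter n phi (a (m - n%:Z)).
Proof.
move=> hl hb hL hK; rewrite /expz.
have z := lin0 (lin_iter _ hl).
apply: (@sum_ext_len _ (fun n => (n`!%:R)^-1 *: iter n phi (a (m - n%:Z)))) => n hn.
  by rewrite vb_lbound // ?z ?scaler0 //; lia.
by rewrite hL ?z ?scaler0 //; lia.
Qed.

Lemma lscale_big (f : int -> k) (a : int -> V) Nf Na (K : nat) m :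
  bounded_below f -> bounded_below a -> vb f Nf -> vb a Na -> m - Nf - Na < K%:Z ->
  lscale f a m = \sum_(i < K) f (Nf + i%:Z) *: a (m - (Nf + i%:Z)).
Proof.
move=> hf ha hNf hNa hK; rewrite /lscale.
transitivity (\sum_(i < (absz (m - lbound f - lbound a)%R).+1) f (lbound f + i%:Z) *: a (m - (lbound f + i%:Z))).
  by apply: eq_bigr => i _; rewrite opprD addrA.
apply: (@zsum_eq _ (fun j => f j *: a (m - j))) => j hj.
- by rewrite vb_lbound // scale0r.
- by rewrite hNf // scale0r.
- by rewrite (vb_lbound ha) ?scaler0 //; lia.
- by rewrite hNa ?scaler0 //; lia.
Qed.

End Big.

Section Comp.
Variables (k : fieldType) (V : lmodType k).
Hypothesis char0 : [pchar k] =i pred0.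

Lemma fact_neq0 n : (n`!%:R : k) != 0.
Proof. by rewrite ((pcharf0P _).1 char0) -lt0n fact_gt0. Qed.

Lemma coef_sum q :
  \sum_(n < q.+1) ((n`!%:R)^-1 * (((q - n)%N)`!%:R)^-1 * (-1) ^+ (q - n) : k)
  = (q == 0)%:R.
Proof.
have := exprDn (-1 : k) 1 q; rewrite addNr expr0n => E.
have -> : ((q == 0)%:R : k) = (q`!%:R)^-1 * (q == 0)%:R.
  by case: q {E} => [|q]; rewrite ?mulr0 // fact0 invr1 mul1r.
rewrite E mulr_sumr; apply: eq_bigr => i _.
rewrite expr1n mulr1 -(bin_fact (leq_ord i)) !natrM -mulr_natr.
have hc : ('C(q, i)%:R : k) != 0.
  by rewrite ((pcharf0P _).1 char0) -lt0n bin_gt0 -ltnS.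
have ha := fact_neq0 i; have hb := fact_neq0 (q - i).
field. by rewrite ha hb hc.
Qed.

Lemma expz_vb (phi : V -> V) (a : int -> V) :
  lin phi -> bounded_below a -> vb (expz phi a) (lbound a).
Proof.
move=> hl hb m hm; rewrite /expz big1 // => n _.
by rewrite vb_lbound // ?(lin0 (lin_iter _ hl)) ?scaler0 //; lia.
Qed.

Lemma expz_bb (phi : V -> V) (a : int -> V) :
  lin phi -> bounded_below a -> bounded_below (expz phi a).
Proof. by move=> hl hb; exists (lbound a); apply: expz_vb. Qed.

Lemma expz_comp (psi chi : V -> V) (b : int -> V) m :
  lin psi -> (forall v, chi v = - psi v) -> bounded_below b ->
  expz psi (expz chi b) m = b m.
Proof.
move=> hl hchi hb.
have -> : chi = (fun v => - psi v) by apply: functional_extensionality.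
have hlc := lin_neg hl.
set Lb := lbound b; set K := (absz (m - Lb)).+1.
have hLb := vb_lbound hb.
have hK : m - Lb < K%:Z by rewrite /K; lia.
have hc := expz_bb hlc hb; have hcL := expz_vb hlc hb.
rewrite (@expz_big _ _ _ _ Lb K) //.
pose F := fun n p : nat => (((n`!%:R)^-1 * (p`!%:R)^-1 * (-1) ^+ p : k))
   *: iter (n + p) psi (b (m - (n + p)%:Z)).
transitivity (\sum_(n < K) \sum_(p < K) F n p).
  apply: eq_bigr => n _.
  rewrite (@expz_big _ _ _ _ Lb K) //; last by lia.
  rewrite lin_sum; last exact: lin_iter.
  rewrite scaler_sumr; apply: eq_bigr => p _.
  rewrite /F (lin_iter n hl).2 iter_neg // (lin_iter n hl).2 -iterD !scalerA.
  by rewrite -addrA -opprD -PoszD; congr (_ *: _); rewrite mulrA [_ * (-1) ^+ p]mulrC mulrA.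
rewrite diag_sum; last first.
  move=> n p hnp; rewrite /F hLb ?(lin0 (lin_iter _ hl)) ?scaler0 //; lia.
transitivity (\sum_(q < K) (q == 0)%:R *: iter q psi (b (m - q%:Z))).
  apply: eq_bigr => q _; rewrite -coef_sum scaler_suml; apply: eq_bigr => n _.
  by rewrite /F subnKC // -ltnS ltn_ord.
rewrite /K big_ord_recl /= scale1r subr0 big1 ?addr0 // => i _.
by rewrite scale0r.
Qed.

End Comp.

Section FP.
Variables (k : fieldType) (V : lmodType k).

Lemma Vz_expz (psi : V -> V) (a : int -> V) :
  lin psi -> (exists N, exists t : seq V, forall v, in_span t (iter N psi v)) ->
  Vz a -> Vz (expz psi a).
Proof.
move=> hl [N [t ht]] [hb [s hs]]; split; first exact: expz_bb.
pose S := flatten [seq map (iter n psi) s | n <- iota 0 N] ++ t.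
exists S.
have key : forall n j, in_span S (iter n psi (a j)).
  move=> n j; case: (hs j) => c ->.
  rewrite lin_sum; last exact: lin_iter.
  apply: in_span_sum => i _; rewrite (lin_iter n hl).2; apply: in_spanZ.
  have xs : s`_i \in s by apply: mem_nth.
  case: (ltnP n N) => hn.
    apply: in_span_mem; rewrite mem_cat; apply/orP; left; apply/flattenP.
    exists (map (iter n psi) s); last exact: map_f.
    by apply: (map_f (fun n => map (iter n psi) s)); rewrite mem_iota.
  rewrite -(subnKC hn) iterD.
  apply: (in_span_sub _ (ht _)) => y yt; apply: in_span_mem.
  by rewrite mem_cat yt orbT.
move=> m; rewrite /expz; apply: in_span_sum => n _; apply: in_spanZ; exact: key.
Qed.

Lemma phibar_vb (phi : V -> V) (c : int -> V) L :
  lin phi -> vb c L -> vb (phibar phi c) L.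
Proof.
move=> hl hc m hm; rewrite /phibar /expz hc // subr0 big1 // => n _.
by rewrite hc ?(lin0 (lin_iter _ hl)) ?scaler0 //; lia.
Qed.

Lemma iter_phibar_vb (phi : V -> V) (a : int -> V) L r :
  lin phi -> vb a L -> vb (iter r (phibar phi) a) L.
Proof. by move=> hl ha; elim: r => [|r IH] //=; apply: phibar_vb. Qed.

Lemma phibar_img (phi : V -> V) (c : int -> V) r :
  lin phi -> (forall j, exists w, c j = iter r phi w) ->
  forall m, exists w, phibar phi c m = iter r.+1 phi w.
Proof.
move=> hl hc m; rewrite /phibar /expz big_ord_recl /= fact0 invr1 scale1r subr0.
rewrite addrAC subrr add0r.
apply: (big_ind (fun v => exists w, v = iter r.+1 phi w)).
- by exists 0; rewrite (lin0 (lin_iter _ hl)).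
- move=> x y [wx ->] [wy ->]; exists (wx + wy).
  by rewrite (lin_iter r.+1 hl).1.
- move=> i _; case: (hc (m - (bump 0 i)%:Z)) => w ->.
  exists (((i.+1)`!%:R)^-1 *: iter i phi w).
  rewrite (lin_iter r.+1 hl).2 -!iterD.
have -> : bump 0 i = i.+1 by rewrite /bump leq0n.
by rewrite add0n addSn /= addnC.
Qed.

End FP.

Section LinZ.
Variables (k : fieldType) (V : lmodType k).

Lemma expz_lscale (phi : V -> V) (f : int -> k) (a b : int -> V) m :
  lin phi -> laurent f -> Vz a -> Vz b ->
  expz phi (fun j => lscale f a j + b j) m = lscale f (expz phi a) m + expz phi b m.
Proof.
move=> hl hf [ha _] [hb _].
have hNf := vb_lbound hf; have hNa := vb_lbound ha; have hLb := vb_lbound hb.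
set Nf := lbound f in hNf *; set Na := lbound a in hNa *; set Lb := lbound b in hLb *.
have [Ld [hL1 hL2]] : exists Ld : int, Ld <= Nf + Na /\ Ld <= Lb.
  by case: (leP (Nf + Na) Lb) => h; [exists (Nf + Na) | exists Lb]; split => //; apply: ltW.
set d := fun j => lscale f a j + b j.
have hdv : vb d Ld.
  move=> j hj; rewrite /d hLb; last by lia.
  by rewrite (@lscale_big _ _ _ _ Nf Na 0) // ?big_ord0 ?addr0 //; lia.
have hdb : bounded_below d by exists Ld.
set K := (absz (m - Ld)%R + absz (m - Nf - Na)%R + absz (m - Lb)%R).+1.
have hK1 : m - Ld < K%:Z by rewrite /K; lia.
have hK2 : m - Nf - Na < K%:Z by rewrite /K; lia.
have hK3 : m - Lb < K%:Z by rewrite /K; lia.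
rewrite (@expz_big _ _ _ _ Ld K) // (@expz_big _ _ _ _ Lb K) //.
rewrite (@lscale_big _ _ _ _ Nf Na K) //; last 2 first.
- exact: expz_bb.
- exact: expz_vb.
rewrite /d.
under eq_bigr => n _ do rewrite (lin_iter n hl).1 scalerDr.
rewrite big_split /=; congr (_ + _).
transitivity (\sum_(n < K) \sum_(i < K) f (Nf + i%:Z) *: ((n`!%:R)^-1 *:
     iter n phi (a (m - (Nf + i%:Z) - n%:Z)))).
  apply: eq_bigr => n _.
  rewrite (@lscale_big _ _ _ _ Nf Na K) //; last by lia.
  rewrite lin_sum; last exact: lin_iter.
  rewrite scaler_sumr; apply: eq_bigr => i _.
  rewrite (lin_iter n hl).2 !scalerA mulrC; congr (_ *: iter _ _ (a _)).
  by rewrite addrAC.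
rewrite exchange_big /=; apply: eq_bigr => i _.
rewrite (@expz_big _ _ _ _ Na K) //; last by lia.
by rewrite scaler_sumr.
Qed.

End LinZ.

Section Final.
Variables (k : fieldType) (V : lmodType k).

Definition cst (x : V) : int -> V := fun j => if j == 0 then x else 0.

Lemma cst_vb x : vb (cst x) 0.
Proof. by move=> j hj; rewrite /cst ifF //; apply/eqP; lia. Qed.

Lemma lscale_const (f : int -> k) x m : bounded_below f -> lscale f (cst x) m = f m *: x.
Proof.
move=> hf; have hcb : bounded_below (cst x) by exists 0; apply: cst_vb.
set Nf := lbound f; set K := (absz (m - Nf)%R).+1.
rewrite (@lscale_big _ _ _ _ Nf 0 K) //; last 3 first.
- exact: vb_lbound.
- exact: cst_vb.
- by rewrite /K; lia.
case: (ltP m Nf) => h.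
  rewrite vb_lbound // scale0r big1 // => i _; rewrite /cst ifF ?scaler0 //; apply/eqP; lia.
rewrite (bigD1 (Ordinal (ltnSn (absz (m - Nf)%R)))) //= big1 ?addr0.
  have e : Nf + (absz (m - Nf)%R)%:Z = m by lia.
  by rewrite e subrr /cst eqxx.
move=> i hi; rewrite /cst ifF ?scaler0 //; apply/negbTE/eqP => e; move/negP: hi; apply.
apply/eqP; apply: val_inj => /=.
move: (nat_of_ord i) e => n e; lia.
Qed.

Lemma iter_phibar_img (phi : V -> V) r (a : int -> V) m :
  lin phi -> exists w, iter r (phibar phi) a m = iter r phi w.
Proof.
move=> hl; elim: r m => [|r IH] m; first by exists (a m).
exact: (phibar_img hl IH).
Qed.

Lemma fpz (phi : {linear V -> V}) : finite_potent phi -> finite_potent_z (phibar phi).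
Proof.
have hl := lin_phi phi.
case=> N [t ht]; exists N, (map cst t); split.
  move=> i; have hi : (i < size t)%N by rewrite -(size_map cst t) ltn_ord.
  rewrite (nth_map 0) //; split; first by exists 0; apply: cst_vb.
  exists [:: t`_i] => m; rewrite /cst; case: ifP => _; last exact: in_span0.
  by apply: in_span_mem; rewrite mem_seq1.
move=> a [ha _]; set c := iter N (phibar phi) a.
have hcv : vb c (lbound a) by apply: iter_phibar_vb => //; exact: vb_lbound.
have hspan : forall m, in_span t (c m).
  by move=> m; case: (iter_phibar_img N a m hl) => w; rewrite /c => ->.
pose coef m : 'I_(size t) -> k := if m < lbound a then fun _ => 0 else
  epsilon (inhabits (fun _ => 0)) (fun cc => c m = \sum_(i < size t) cc i *: t`_i).
have hcoef : forall m, c m = \sum_(i < size t) coef m i *: t`_i.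
  move=> m; rewrite /coef; case: ifP => h.
    by rewrite hcv // big1 // => i _; rewrite scale0r.
  exact: (epsilon_spec (inhabits (fun _ => 0)) (fun cc => c m = \sum_(i < size t) cc i *: t`_i) (hspan m)).
pose cn (m : int) (j : nat) : k := if insub j is Some o then coef m o else 0.
have hcnb : forall j, bounded_below (fun m => cn m j).
  move=> j; exists (lbound a) => m hm; rewrite /cn /coef hm.
  by case: insub.
exists (fun i m => cn m (val i)); split.
  by move=> i; apply: hcnb.
move=> m; rewrite hcoef.
transitivity (\sum_(i < size t) cn m i *: t`_i).
  by apply: eq_bigr => o _; rewrite /cn valK.
rewrite -(big_mkord xpredT (fun i => cn m i *: t`_i)) -(size_map cst t) big_mkord.
apply: eq_bigr => i _.
have hi : (i < size t)%N by rewrite -(size_map cst t) ltn_ord.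
by rewrite (nth_map 0) // lscale_const.
Qed.

End Final.

Theorem proposition4p1 (k : fieldType) (V : lmodType k) (phi : {linear V -> V}) :
  [pchar k] =i pred0 ->
  finite_potent phi ->
  [/\ (* exp_z(phi) maps V_z into V_z *)
      (forall a, Vz a -> Vz (expz phi a)),
      (* it is k((z))-linear *)
      (forall (f : int -> k) (a b : int -> V), laurent f -> Vz a -> Vz b ->
         forall m, expz phi (fun j => lscale f a j + b j) m
                   = lscale f (expz phi a) m + expz phi b m),
      (* it is surjective on V_z *)
      (forall b, Vz b -> exists a, Vz a /\ forall m, expz phi a m = b m),
      (* it is injective on V_z *)
      (forall a a', Vz a -> Vz a' ->
         (forall m, expz phi a m = expz phi a' m) -> forall m, a m = a' m) &
      (* exp_z(phi) - 1 is finite potent on V_z *)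
      finite_potent_z (phibar phi)].
Proof.
move=> char0 fp; have hl := lin_phi phi.
have fpn : exists N, exists t : seq V, forall v, in_span t (iter N (fun v => - phi v) v).
  case: fp => N [t ht]; exists N, t => v; rewrite iter_neg //; apply: in_spanZ; exact: ht.
split.
- by move=> a ha; apply: Vz_expz.
- by move=> f a b hf ha hb m; apply: expz_lscale.
- move=> b hb; exists (expz (fun v => - phi v) b); split.
    by apply: Vz_expz => //; apply: lin_neg.
  by move=> m; apply: expz_comp => //; case: hb.
- move=> a a' [ha _] [ha' _] H m.
  have E : expz phi a = expz phi a' by apply: functional_extensionality.
  have hln := lin_neg hl.
  transitivity (expz (fun v => - phi v) (expz phi a) m).
    by symmetry; apply: expz_comp => // v; rewrite opprK.
  by rewrite E; apply: expz_comp => // v; rewrite opprK.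
- exact: fpz.
Qed.
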